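(* Let $\mathbf q=(q_1,\dots,q_R)$ be route flows, $\mathbf t=(t_1,\dots,t_R)$ route travel times, and let $\mu$ be an assignment plan inducing an offer profile $T^{CAV}$ subject to $(\mathbf q,\mathbf t)$. Then there exist measurable weights $\alpha^{r_1r_2}:I\to[0,1]$, $(r_1,r_2)\in\{1,\dots,R\}^2$, with $\sum_{r_1,r_2}\alpha^{r_1r_2}(i)=1$, and measurable vectors $\mu^R(i,r_1,r_2,\cdot)\in\Delta^{R-1}$, each having at most two positive coordinates, such that for a.e. $i$: $\sum_rt_r\mu^R(i,r_1,r_2,r)=T^{CAV}_i$ whenever $\alpha^{r_1r_2}(i)>0$, and $\sum_{r_1,r_2}\alpha^{r_1r_2}(i)\mu^R(i,r_1,r_2,r)=\mu(i,r)$ for every $r$. Equivalently, on the augmented driver space $\tilde I=I\times\{1,\dots,R\}^2$ with measure $\tilde{di}(A)=\int_I\sum_{r_1,r_2}\alpha^{r_1r_2}(i)\mathbf 1_{(i,r_1,r_2)\in A}\,di$ (which splits each driver into finitely many parts), $\mu^R$ is an assignment plan whose induced distribution on $\Delta^{R-1}$ is supported on vectors with at most two nonzero coordinates, which induces the same travel time distribution as $\mu$, and from which $\mu$ is recovered by recombining the parts of each driver. (Such a plan is in general not unique.)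
   Context: Drivers form a measure space $(I,di)$ of total mass $q=\sum_rq_r$. $\Delta^{R-1}=\{(x_1,\dots,x_R):x_r\ge0,\sum_rx_r=1\}$. An offer profile subject to $(\mathbf q,\mathbf t)$ is a measurable $T^{CAV}:I\to[\min_rt_r,\max_rt_r]$ with $\frac1{|I|}\int_IT^{CAV}_i\,di=\frac1q\sum_rq_rt_r$. An assignment plan inducing $T^{CAV}$ is a measurable $\mu:I\times\{1,\dots,R\}\to[0,1]$ with $\int_I\mu(i,r)\,di=q_r$ for every $r$, $\sum_r\mu(i,r)=1$ and $\sum_rt_r\mu(i,r)=T^{CAV}_i$ for a.e. $i$. The travel time distribution induced by a plan is the push-forward of the driver measure under $i\mapsto\sum_rt_r\mu(i,r)$. *)

(* Defs.v *)
From HB Require Import structures.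
From mathcomp Require Import all_boot all_order all_algebra.
From mathcomp Require Import all_classical all_reals all_analysis.
Set Implicit Arguments. Unset Strict Implicit. Unset Printing Implicit Defensive.
Import Order.TTheory GRing.Theory Num.Theory.
Local Open Scope classical_set_scope.
Local Open Scope ring_scope.

Definition total_flow (R : realType) (nR : nat) (q : 'I_nR -> R) : R :=
  \sum_(r < nR) q r.

(* Offer profile subject to (q, t): measurable T : I -> [min_r t_r, max_r t_r]
   with (1/|I|) int_I T = (1/q) sum_r q_r t_r. *)
Definition offer_profile (d : measure_display) (I : measurableType d)
  (R : realType) (P : {measure set I -> \bar R}) (nR : nat)
  (q t : 'I_nR -> R) (T : I -> R) : Prop :=
  [/\ measurable_fun setT T,
      (forall i, (exists r, t r <= T i) /\ (exists r, T i <= t r)) &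
      (fine (P setT))^-1 * Rintegral P setT T =
      (total_flow q)^-1 * \sum_(r < nR) q r * t r].

Definition assignment_plan (d : measure_display) (I : measurableType d)
  (R : realType) (P : {measure set I -> \bar R}) (nR : nat)
  (q t : 'I_nR -> R) (T : I -> R) (mu : I -> 'I_nR -> R) : Prop :=
  [/\ (forall r, measurable_fun setT (fun i => mu i r)),
      (forall i r, 0 <= mu i r <= 1),
      (forall r, (\int[P]_(i in setT) (mu i r)%:E = (q r)%:E)%E),
      {ae P, forall i, \sum_(r < nR) mu i r = 1} &
      {ae P, forall i, \sum_(r < nR) t r * mu i r = T i}].

Definition in_simplex (R : realType) (nR : nat) (x : 'I_nR -> R) : Prop :=
  (forall r, 0 <= x r) /\ \sum_(r < nR) x r = 1.

Definition at_most_two_positive (R : realType) (nR : nat) (x : 'I_nR -> R) : Prop :=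
  (#|[pred r : 'I_nR | (0 < x r)%R]| <= 2)%N.

(* Main.v *)
Require Import Defs.
From HB Require Import structures.
From mathcomp Require Import all_boot all_order all_algebra.
From mathcomp Require Import all_classical all_reals all_analysis.
From mathcomp Require Import measurable_realfun.
From mathcomp Require Import ring lra.
Import Order.TTheory GRing.Theory Num.Theory.
Local Open Scope classical_set_scope.
Local Open Scope ring_scope.

Module Helpers.
Set Implicit Arguments. Unset Strict Implicit.

Section PW.
Context (R : realType) (n : nat) (t : 'I_n -> R).

Lemma sum_ind (a : 'I_n) (F : 'I_n -> R) : \sum_(r < n) (r == a)%:R * F r = F a.
Proof.
rewrite (bigD1 a) //= eqxx mul1r big1 ?addr0 // => r /negbTE ->; by rewrite mul0r.
Qed.

Lemma sum_ind' (a : 'I_n) (F : 'I_n -> R) : \sum_(r < n) F r * (r == a)%:R = F a.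
Proof. rewrite -(sum_ind a); apply: eq_bigr => r _; by rewrite mulrC. Qed.

Definition pr (T : R) r1 r2 := (t r1 < T) && (T < t r2).
Definition DU (T : R) (m : 'I_n -> R) :=
  \sum_(r < n) (if T < t r then m r * (t r - T) else 0).
Definition DL (T : R) (m : 'I_n -> R) :=
  \sum_(r < n) (if t r < T then m r * (T - t r) else 0).
Definition alpha0 T m r1 r2 :=
  if pr T r1 r2 then m r1 * m r2 * (t r2 - t r1) * (DU T m)^-1
  else if (r1 == r2) && (t r1 == T) then m r1 else 0.
Definition muR0 T r1 r2 (r : 'I_n) : R :=
  if pr T r1 r2 then (r == r1)%:R * ((t r2 - T) * (t r2 - t r1)^-1)
                    + (r == r2)%:R * ((T - t r1) * (t r2 - t r1)^-1)
  else (r == r1)%:R.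

Lemma muR0_ge0 T r1 r2 r : 0 <= muR0 T r1 r2 r.
Proof.
rewrite /muR0 /pr; case: ifP => [/andP[h1 h2]|_]; last exact: ler0n.
have hd : 0 < t r2 - t r1 by rewrite subr_gt0 (lt_trans h1 h2).
have hi : 0 <= (t r2 - t r1)^-1 by rewrite invr_ge0 ltW.
have ha : 0 <= t r2 - T by rewrite subr_ge0 ltW.
have hb : 0 <= T - t r1 by rewrite subr_ge0 ltW.
by apply: addr_ge0; apply: mulr_ge0 => //; apply: mulr_ge0.
Qed.

Lemma muR0_sum T r1 r2 : \sum_(r < n) muR0 T r1 r2 r = 1.
Proof.
rewrite /muR0; case hp: (pr T r1 r2); move: hp; rewrite /pr; [move=> /andP[h1 h2]|move=> _]; last first.
  rewrite (eq_bigr (fun r => (fun _ => 1) r * (r == r1)%:R)); first exact: sum_ind'.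
  by move=> r _; rewrite mul1r.
have hd : t r2 - t r1 != 0 by rewrite subr_eq0 gt_eqF // (lt_trans h1 h2).
rewrite big_split /= !sum_ind; by field.
Qed.

Lemma muR0_two T r1 r2 r : r != r1 -> r != r2 -> muR0 T r1 r2 r = 0.
Proof.
by move=> /negbTE h1 /negbTE h2; rewrite /muR0 h1 h2 !mul0r addr0; case: ifP.
Qed.

Lemma muR0_mean T r1 r2 : pr T r1 r2 ->
  \sum_(r < n) t r * muR0 T r1 r2 r = T.
Proof.
rewrite /muR0 => hp; rewrite hp; move: hp; rewrite /pr => /andP[h1 h2].
have hd : t r2 - t r1 != 0 by rewrite subr_eq0 gt_eqF // (lt_trans h1 h2).
under eq_bigr do rewrite mulrDr (mulrCA (t _)) (mulrCA (t _) ((_ == r2)%:R)).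
rewrite big_split /= !sum_ind; by field.
Qed.

Lemma muR0_mean_diag T r1 r2 : ~~ pr T r1 r2 ->
  \sum_(r < n) t r * muR0 T r1 r2 r = t r1.
Proof. by rewrite /muR0 => /negbTE ->; rewrite sum_ind'. Qed.

Lemma DU_ge0 T m : (forall r, 0 <= m r) -> 0 <= DU T m.
Proof.
move=> m0; apply: sumr_ge0 => r _; case: ifP => // h.
by apply: mulr_ge0 => //; rewrite subr_ge0 ltW.
Qed.

Lemma alpha0_ge0 T m r1 r2 : (forall r, 0 <= m r) -> 0 <= alpha0 T m r1 r2.
Proof.
move=> m0; rewrite /alpha0 /pr; case: ifP => [/andP[h1 h2]|_].
  apply: mulr_ge0; last by rewrite invr_ge0 DU_ge0.
  by rewrite !mulr_ge0 // subr_ge0 ltW // (lt_trans h1 h2).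
by case: ifP.
Qed.


Lemma term_le_sum (F : 'I_n -> R) a : (forall r, 0 <= F r) -> F a <= \sum_(r < n) F r.
Proof. by move=> F0; rewrite (bigD1 a) //= lerDl sumr_ge0. Qed.

Section Good.
Context (T : R) (m : 'I_n -> R) (m0 : forall r, 0 <= m r)
  (hs : \sum_(r < n) m r = 1) (ht : \sum_(r < n) t r * m r = T).

Lemma DLU : DL T m = DU T m.
Proof.
apply/eqP; rewrite eq_sym -subr_eq0; apply/eqP.
rewrite /DU /DL -sumrB.
transitivity (\sum_(r < n) t r * m r - T * \sum_(r < n) m r); last by rewrite hs ht mulr1 subrr.
rewrite big_distrr -sumrB; apply: eq_bigr => r _.
case: (ltgtP (t r) T) => h /=.
- by rewrite sub0r; ring.
- by rewrite subr0; ring.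
- by rewrite h subrr subrr.
Qed.

Lemma recomb r : \sum_(r1 < n) \sum_(r2 < n) alpha0 T m r1 r2 * muR0 T r1 r2 r = m r.
Proof.
set Di := (DU T m)^-1.
have e : forall r1 r2, alpha0 T m r1 r2 * muR0 T r1 r2 r =
   (r1 == r)%:R * ((if t r1 < T then m r1 * Di else 0) * (if T < t r2 then m r2 * (t r2 - T) else 0))
 + (r2 == r)%:R * ((if t r1 < T then m r1 * (T - t r1) else 0) * (if T < t r2 then m r2 * Di else 0))
 + (r2 == r1)%:R * ((r1 == r)%:R * (if t r1 == T then m r1 else 0)).
  move=> r1 r2; rewrite /alpha0 /muR0 /pr -/Di.
  case: (ltgtP (t r1) T) => h1 /=; case: (ltgtP T (t r2)) => h2 /=;
    rewrite ?mul0r ?mulr0 ?add0r ?addr0 ?eqxx ?andbF ?andbT.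
  1: (have hd : t r2 - t r1 != 0 by rewrite subr_eq0 gt_eqF // (lt_trans h1 h2));
     rewrite (eq_sym r r1) (eq_sym r r2); by field.
  all: try by rewrite mul0r.
  all: try by rewrite (eq_sym r2 r1) (eq_sym r r1); case: (r1 == r2); rewrite ?mul1r ?mul0r // mulrC.
under eq_bigr => r1 _ do under eq_bigr => r2 _ do rewrite e.
under eq_bigr => r1 _ do rewrite !big_split /=.
rewrite !big_split /=.
have -> : \sum_(r1 < n) \sum_(r2 < n) (r1 == r)%:R * ((if t r1 < T then m r1 * Di else 0) * (if T < t r2 then m r2 * (t r2 - T) else 0))
   = (if t r < T then m r * Di else 0) * DU T m.
  by under eq_bigr do rewrite -big_distrr -big_distrr /=; rewrite sum_ind.
have -> : \sum_(r1 < n) \sum_(r2 < n) (r2 == r)%:R * ((if t r1 < T then m r1 * (T - t r1) else 0) * (if T < t r2 then m r2 * Di else 0))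
   = DL T m * (if T < t r then m r * Di else 0).
  by rewrite exchange_big /=; under eq_bigr do rewrite -big_distrr -big_distrl /=; rewrite sum_ind.
under eq_bigr do rewrite sum_ind.
rewrite sum_ind DLU.
have kL : DU T m = 0 -> t r < T -> m r = 0.
  move=> D0 h.
  have F0 : forall r', 0 <= (fun r' => if t r' < T then m r' * (T - t r') else 0) r'.
    by move=> r' /=; case: ifP => // h'; rewrite mulr_ge0 // subr_ge0 ltW.
  have := @term_le_sum _ r F0; rewrite /= h.
  rewrite -/(DL T m) DLU D0.
  move=> hle; have : m r * (T - t r) = 0 by apply/eqP; rewrite eq_le hle mulr_ge0 // subr_ge0 ltW.
  by move/eqP; rewrite mulf_eq0 subr_eq0 (gt_eqF h) orbF => /eqP.
have kU : DU T m = 0 -> T < t r -> m r = 0.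
  move=> D0 h.
  have F0 : forall r', 0 <= (fun r' => if T < t r' then m r' * (t r' - T) else 0) r'.
    by move=> r' /=; case: ifP => // h'; rewrite mulr_ge0 // subr_ge0 ltW.
  have := @term_le_sum _ r F0; rewrite /= h.
  rewrite -/(DU T m) D0.
  move=> hle; have : m r * (t r - T) = 0 by apply/eqP; rewrite eq_le hle mulr_ge0 // subr_ge0 ltW.
  by move/eqP; rewrite mulf_eq0 subr_eq0 (gt_eqF h) orbF => /eqP.
case: (eqVneq (DU T m) 0) => hD.
  rewrite /Di hD invr0 !mulr0 ?mul0r ?add0r.
  case: (ltgtP (t r) T) => h; rewrite ?add0r //; by [rewrite kL | rewrite kU].
have hDi : Di * DU T m = 1 by rewrite /Di mulVf.
case: (ltgtP (t r) T) => h; rewrite ?mulr0 ?mul0r ?addr0 ?add0r //.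
  by rewrite /Di -mulrA mulVf ?mulr1.
by rewrite /Di mulrCA mulfV ?mulr1.
Qed.


Lemma alpha0_sum : \sum_(r1 < n) \sum_(r2 < n) alpha0 T m r1 r2 = 1.
Proof.
transitivity (\sum_(r1 < n) \sum_(r2 < n) \sum_(r < n) alpha0 T m r1 r2 * muR0 T r1 r2 r).
  apply: eq_bigr => r1 _; apply: eq_bigr => r2 _.
  by rewrite -big_distrr /= muR0_sum mulr1.
under eq_bigr do rewrite exchange_big /=.
rewrite exchange_big /=.
under eq_bigr do rewrite recomb.
exact: hs.
Qed.

End Good.

Lemma mean_pos T m r1 r2 : 0 < alpha0 T m r1 r2 ->
  \sum_(r < n) t r * muR0 T r1 r2 r = T.
Proof.
case hp: (pr T r1 r2); first by move=> _; exact: muR0_mean.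
rewrite muR0_mean_diag ?hp // /alpha0 hp.
case: ifP; last by rewrite ltxx.
by move=> /andP[_ /eqP].
Qed.


End PW.

Lemma inv_meas (R : realType) : measurable_fun [set: R] (GRing.inv : R -> R).
Proof.
have -> : (GRing.inv : R -> R) = (fun x => if x == 0 then 0 else x^-1).
  by apply/funext => x; case: eqP => // ->; rewrite invr0.
apply: measurable_fun_if => //; first exact: measurable_fun_eqr.
have -> : [set: R] `&` (fun x : R => x == 0) @^-1` [set false] = ~` [set 0].
  by apply/seteqP; split => x /=; [case=> _ /negbT/eqP | move=> /eqP/negbTE].
apply: open_continuous_measurable_fun.
  apply: closed_openC. apply: accessible_closed_set1. apply: hausdorff_accessible. exact: Rhausdorff.
move=> x; rewrite inE /= => /eqP x0; exact: inv_continuous.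
Qed.

Section Meas.
Context d (I : measurableType d) (R : realType) (n : nat) (t : 'I_n -> R)
  (T : I -> R) (mu : I -> 'I_n -> R) (mT : measurable_fun setT T)
  (mmu : forall r, measurable_fun setT (fun i => mu i r)).

Lemma mpr r1 r2 : measurable_fun setT (fun i => pr t (T i) r1 r2).
Proof. by rewrite /pr; apply: measurable_and; apply: measurable_fun_ltr. Qed.

Lemma mDU : measurable_fun setT (fun i => DU t (T i) (mu i)).
Proof.
rewrite /DU; apply: measurable_sum => r; apply: measurable_fun_ifT.
- exact: measurable_fun_ltr.
- by apply: measurable_funM => //; apply: measurable_funB.
- exact: measurable_cst.
Qed.

Lemma malpha0 r1 r2 : measurable_fun setT (fun i => alpha0 t (T i) (mu i) r1 r2).
Proof.
rewrite /alpha0; apply: measurable_fun_ifT; first exact: mpr.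
  apply: measurable_funM; last exact: measurableT_comp (@inv_meas R) mDU.
  apply: measurable_funM => //; apply: measurable_funM => //.
apply: measurable_fun_ifT.
- by apply: measurable_and => //; apply: measurable_fun_eqr.
- exact: mmu.
- exact: measurable_cst.
Qed.

Lemma mmuR0 r1 r2 r : measurable_fun setT (fun i => muR0 t (T i) r1 r2 r).
Proof.
rewrite /muR0; apply: measurable_fun_ifT; first exact: mpr.
  apply: measurable_funD; apply: measurable_funM => //; apply: measurable_funM => //.
    exact: measurable_funB.
  exact: measurable_funB.
exact: measurable_cst.
Qed.

End Meas.
End Helpers.
Import Helpers.


Theorem proposition7 (d : measure_display) (I : measurableType d)
  (R : realType) (P : {measure set I -> \bar R}) (nR : nat)
  (q t : 'I_nR -> R) (T : I -> R) (mu : I -> 'I_nR -> R) :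
  (0 < nR)%N ->
  (forall r, 0 <= q r) ->
  P setT = (total_flow q)%:E ->
  offer_profile P q t T ->
  assignment_plan P q t T mu ->
  exists (alpha : I -> 'I_nR -> 'I_nR -> R)
         (muR : I -> 'I_nR -> 'I_nR -> 'I_nR -> R),
    [/\ (forall r1 r2, measurable_fun setT (fun i => alpha i r1 r2)),
        (forall i r1 r2, 0 <= alpha i r1 r2 <= 1),
        (forall i, \sum_(r1 < nR) \sum_(r2 < nR) alpha i r1 r2 = 1) &
        (forall r1 r2 r, measurable_fun setT (fun i => muR i r1 r2 r))] /\
    [/\ (forall i r1 r2, in_simplex (muR i r1 r2)),
        (forall i r1 r2, at_most_two_positive (muR i r1 r2)) &
        {ae P, forall i,
          (forall r1 r2, 0 < alpha i r1 r2 ->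
             \sum_(r < nR) t r * muR i r1 r2 r = T i) /\
          (forall r, \sum_(r1 < nR) \sum_(r2 < nR) alpha i r1 r2 * muR i r1 r2 r
                     = mu i r)}].

Proof.
move=> hn q0 PT [mT _ _] [mmu mu01 _ hsum hmean].
set r0 : 'I_nR := Ordinal hn.
set S := fun i => \sum_(r1 < nR) \sum_(r2 < nR) alpha0 t (T i) (mu i) r1 r2.
have m0 : forall i r, 0 <= mu i r by move=> i r; case/andP: (mu01 i r).
exists (fun i r1 r2 => if S i == 1 then alpha0 t (T i) (mu i) r1 r2
                       else (r1 == r0)%:R * (r2 == r0)%:R).
exists (fun i r1 r2 r => muR0 t (T i) r1 r2 r).
split; split.
- move=> r1 r2; apply: measurable_fun_ifT.
  + apply: measurable_fun_eqr => //; rewrite /S.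
    apply: measurable_sum => r1'; apply: measurable_sum => r2'; exact: malpha0.
  + exact: malpha0.
  + exact: measurable_cst.
- move=> i r1 r2; case: ifP => [/eqP hS|_].
    rewrite alpha0_ge0 //= -hS.
    have g0 : forall a b, 0 <= alpha0 t (T i) (mu i) a b by move=> a b; exact: alpha0_ge0.
    have h1 := @term_le_sum R nR (fun b => alpha0 t (T i) (mu i) r1 b) r2 (g0 r1).
    have h2 := @term_le_sum R nR (fun a => \sum_(b < nR) alpha0 t (T i) (mu i) a b) r1
      (fun a => sumr_ge0 _ (fun b _ => g0 a b)).
    exact: le_trans h1 h2.
  by case: (r1 == r0); case: (r2 == r0); rewrite ?mul1r ?mul0r ?ler01 ?lexx.
- move=> i; case hS: (S i == 1); first by move/eqP: hS.
  under eq_bigr do rewrite sum_ind'.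
  rewrite (eq_bigr (fun r => 1 * (r == r0)%:R)); [exact: sum_ind' | by move=> r _; rewrite mul1r].
- move=> r1 r2 r; exact: mmuR0.
- move=> i r1 r2; split; [exact: muR0_ge0 | exact: muR0_sum].
- move=> i r1 r2; rewrite /at_most_two_positive.
  apply: leq_trans (card_size [:: r1; r2]).
  apply: subset_leq_card; apply/fintype.subsetP => r.
  rewrite inE /= => hpos; rewrite !inE.
  case: (boolP (r == r1)) => // h1; case: (boolP (r == r2)) => // h2.
  by move: hpos; rewrite muR0_two // ltxx.
- apply: filterS2 hsum hmean => i hs ht.
  have hS : S i = 1 by apply: alpha0_sum.
  rewrite hS eqxx; split.
    by move=> r1 r2; exact: mean_pos.
  by move=> r; apply: recomb.
Qed.
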